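(* Let $F/\mathbb{F}_q$ be a function field of genus $g$ with full constant field $\mathbb{F}_q$, $\sigma\in\mathrm{Aut}(F/\mathbb{F}_q)$, $N,m,l$ positive integers, $P_1,\dots,P_N$ rational places such that the $mN$ places $P_i^{\sigma^j}$ ($1\le i\le N$, $0\le j\le m-1$) are pairwise distinct rational places, and $D$ a divisor of degree $e$ with $D^\sigma=D$ and no $P_i^{\sigma^j}$ in $\mathrm{Supp}(D)$. Let $s$ be an integer with $1\le s\le m$ and let $\mathbf{y}=(y_{i,j})_{1\le i\le N,\,1\le j\le m}$ with $y_{i,j}\in\mathbb{F}_q$ be any received word. Put \[\kappa=\left\lceil\frac{N(m-s+1)-el+(s+1)(g-1)+1}{e(s+1)}\right\rceil.\] Then there exist $A_0\in\mathcal{L}((\kappa+l)D)$ and $A_1,\dots,A_s\in\mathcal{L}(\kappa D)$, not all zero, such that the polynomial $Q(Y_1,\dots,Y_s)=A_0+A_1Y_1+\cdots+A_sY_s\in F[Y_1,\dots,Y_s]$ satisfies \[A_0(P_i^{\sigma^j})+A_1(P_i^{\sigma^j})y_{i,j+1}+\cdots+A_s(P_i^{\sigma^j})y_{i,j+s}=0\] for all $i=1,\dots,N$ and $j=0,1,\dots,m-s$.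
   Context: For a place $P$ and $f\in F$ with $\nu_P(f)\ge 0$, $f(P)$ denotes the residue class of $f$ at $P$. For $\phi\in\mathrm{Aut}(F/\mathbb{F}_q)$, $P^{\phi}=\{\phi(x):x\in P\}$ and $G^{\phi}=\sum m_PP^{\phi}$ for $G=\sum m_PP$. $\mathcal{L}(G)=\{f\in F^*:\mathrm{div}(f)+G\ge 0\}\cup\{0\}$. *)

(* Defs.v *)
From HB Require Import structures.
From mathcomp Require Import all_boot all_order all_algebra all_field.
Set Implicit Arguments. Unset Strict Implicit. Unset Printing Implicit Defensive.
Import Order.TTheory GRing.Theory Num.Theory.
Local Open Scope ring_scope.

Section FunctionFields.
Variables (K : finFieldType) (F : fieldType) (iota : {rmorphism K -> F}).

(* F/K is an algebraic function field in one variable: there is x in F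
   transcendental over K with [F : K(x)] finite. *)
Definition is_function_field : Prop :=
  exists x : F,
    (forall p : {poly K}, p != 0 -> (map_poly iota p).[x] != 0) /\
    exists (n : nat) (b : 'I_n -> F), forall z : F,
      exists r : 'I_n -> F,
        (forall i, exists p q : {poly K},
            (map_poly iota q).[x] != 0 /\
            r i = (map_poly iota p).[x] / (map_poly iota q).[x]) /\
        z = \sum_(i < n) r i * b i.

Definition full_constant_field : Prop :=
  forall z : F, (exists p : {poly K}, p != 0 /\ root (map_poly iota p) z) ->
    exists a : K, z = iota a.

(* Places of F/K are represented by their normalized discrete valuations
   nu_P : F -> int (with the convention nu_P 0 = 0 in place of +oo). *)
Definition is_place (v : F -> int) : Prop :=
  [/\ v 0 = 0,
      (forall x y, x != 0 -> y != 0 -> v (x * y) = v x + v y),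
      (forall x y, x != 0 -> y != 0 -> x + y != 0 ->
          Num.min (v x) (v y) <= v (x + y)),
      (exists t, t != 0 /\ v t = 1) &
      (forall a : K, a != 0 -> v (iota a) = 0)].

Definition inO (v : F -> int) (f : F) : bool := (f == 0) || (0 <= v f).
Definition inP (v : F -> int) (f : F) : bool := (f == 0) || (0 < v f).

Definition place_deg (v : F -> int) (n : nat) : Prop :=
  exists b : 'I_n -> F,
    [/\ (forall i, inO v (b i)),
        (forall c : 'I_n -> K, inP v (\sum_(i < n) iota (c i) * b i) ->
            forall i, c i = 0) &
        (forall f, inO v f -> exists c : 'I_n -> K,
            inP v (f - \sum_(i < n) iota (c i) * b i))].

Definition rational_place (v : F -> int) : Prop := is_place v /\ place_deg v 1.

(* residue class f(P) in O_P/P = K, for a rational place P and f in O_P *)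
Definition resid (v : F -> int) (f : F) : K :=
  odflt 0 [pick a : K | inP v (f - iota a)].

Definition is_divisor (D : (F -> int) -> int) : Prop :=
  (forall w, D w != 0 -> is_place w) /\
  exists (n : nat) (ws : 'I_n -> (F -> int)),
    forall w, D w != 0 -> exists i, w = ws i.

Definition div_deg (D : (F -> int) -> int) (e : int) : Prop :=
  exists (n : nat) (ws : 'I_n -> (F -> int)) (d : 'I_n -> nat),
    [/\ injective ws,
        (forall w, D w != 0 -> exists i, w = ws i),
        (forall i, is_place (ws i) /\ place_deg (ws i) (d i)) &
        e = \sum_(i < n) D (ws i) * (d i)%:Z].

Definition scale_div (k : int) (D : (F -> int) -> int) : (F -> int) -> int :=
  fun w => k * D w.

Definition inL (G : (F -> int) -> int) (f : F) : Prop :=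
  f = 0 \/ (forall w, is_place w -> 0 <= w f + G w).

Definition K_indep (n : nat) (f : 'I_n -> F) : Prop :=
  forall c : 'I_n -> K, \sum_(i < n) iota (c i) * f i = 0 -> forall i, c i = 0.

Definition ell_ge (A : (F -> int) -> int) (k : int) : Prop :=
  exists (n : nat) (f : 'I_n -> F), k <= n%:Z /\ (forall i, inL A (f i)) /\ K_indep f.

(* g = max { deg A - ell(A) + 1 : A divisor }  (Stichtenoth, Def. 1.4.15) *)
Definition is_genus (g : int) : Prop :=
  (forall A d, is_divisor A -> div_deg A d -> ell_ge A (d + 1 - g)) /\
  (exists A d, [/\ is_divisor A, div_deg A d & ~ ell_ge A (d + 2 - g)]).

End FunctionFields.

Definition place_act (F : Type) (sigma_inv : F -> F) (v : F -> int) : F -> int :=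
  fun x => v (sigma_inv x).

Definition place_iter (F : Type) (sigma_inv : F -> F) (j : nat) (v : F -> int)
  : F -> int := iter j (place_act sigma_inv) v.

(* ceiling of a / b for b > 0 *)
Definition ceil_div (a b : int) : int := - ((- a) %/ b)%Z.

(* Main.v *)
From HB Require Import structures.
From mathcomp Require Import all_boot all_order all_algebra all_field.
Import Order.TTheory GRing.Theory Num.Theory.
From mathcomp Require Import zify ring lra.
Local Open Scope ring_scope.

Require Import Defs.
Lemma kernel_exists (K : fieldType) (T E : finType) (M : T -> E -> K) :
  (#|E| < #|T|)%N ->
  exists c : T -> K, (exists t, c t != 0) /\ forall e, \sum_t c t * M t e = 0.
Proof.
move=> hlt.
pose A : 'M[K]_(#|T|, #|E|) := \matrix_(i, j) M (enum_val i) (enum_val j).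
have hk : kermx A != 0.
  rewrite kermx_eq0 /row_free; apply/negP => /eqP h.
  have := rank_leq_col A; rewrite h => h2.
  by move: (leq_trans hlt h2); rewrite ltnn.
have [i hi] : exists i, row i (kermx A) != 0.
  apply/existsP; apply: contraR hk; rewrite negb_exists => /forallP h.
  apply/eqP/row_matrixP => i; rewrite row0; exact/eqP/negPn/h.
pose u := row i (kermx A).
have hu : u *m A = 0 by rewrite /u -row_mul mulmx_ker row0.
exists (fun t => u 0 (enum_rank t)); split.
  have [j hj] : exists j, u 0 j != 0.
    apply/existsP; apply: contraR hi; rewrite negb_exists => /forallP h.
    apply/eqP/rowP => j; move: (h j); rewrite negbK /u mxE => /eqP ->.
    by rewrite mxE.
  by exists (enum_val j); rewrite enum_valK.
move=> e.
transitivity ((u *m A) 0 (enum_rank e)); last by rewrite hu mxE.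
rewrite mxE.
rewrite [RHS](reindex (@enum_rank T)) /=; last first.
  by exists enum_val => x _; [rewrite enum_rankK | rewrite enum_valK].
apply: eq_bigr => t _; by rewrite mxE [A _ _]mxE !enum_rankK.
Qed.

Section Val.
Variables (K : finFieldType) (F : fieldType) (iota : {rmorphism K -> F}).
Variable v : F -> int.
Hypothesis hv : is_place iota v.

Lemma v_min x y : x != 0 -> y != 0 -> x + y != 0 ->
  Num.min (v x) (v y) <= v (x + y).
Proof. by have [_ _ h _ _] := hv; apply: h. Qed.
Lemma v_mul x y : x != 0 -> y != 0 -> v (x * y) = v x + v y.
Proof. by have [_ h _ _ _] := hv; apply: h. Qed.
Lemma v_iota a : a != 0 -> v (iota a) = 0.
Proof. by have [_ _ _ _ h] := hv; apply: h. Qed.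

Lemma iota_neq0 a : a != 0 -> iota a != 0.
Proof. by rewrite fmorph_eq0. Qed.

Lemma inO_iota a : inO v (iota a).
Proof.
rewrite /inO; have [->|a0] := eqVneq a 0; first by rewrite rmorph0 eqxx.
by rewrite v_iota // lexx orbT.
Qed.

Lemma inP_add {x y} : inP v x -> inP v y -> inP v (x + y).
Proof.
rewrite /inP; have [->|x0] := eqVneq x 0; first by rewrite add0r.
have [->|y0] := eqVneq y 0; first by move=> h _; rewrite addr0 (negbTE x0).
have [->|s0] := eqVneq (x + y) 0; first by [].
move=> /= hx hy; have := @v_min x y x0 y0 s0.
apply: lt_le_trans; by rewrite lt_min hx hy.
Qed.

Lemma inP_mul {z x} : inO v z -> inP v x -> inP v (z * x).
Proof.
rewrite /inP /inO; have [->|z0] := eqVneq z 0; first by rewrite mul0r eqxx.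
have [->|x0] := eqVneq x 0; first by rewrite mulr0 eqxx.
move=> /= hz hx; rewrite mulf_eq0 (negbTE z0) (negbTE x0) /= v_mul //.
by apply: ltr_wpDl.
Qed.

Lemma inP_opp {x} : inP v x -> inP v (- x).
Proof. move=> h; rewrite -mulN1r -(rmorphN1 iota); exact: inP_mul (inO_iota _) h. Qed.

Lemma inP_iota a : inP v (iota a) -> a = 0.
Proof.
rewrite /inP; have [->|a0] //= := eqVneq a 0.
by rewrite fmorph_eq0 (negbTE a0) v_iota // ltxx.
Qed.

Lemma resid_uniq {f a} : inP v (f - iota a) -> resid iota v f = a.
Proof.
move=> ha; rewrite /resid; case: pickP => [b hb|/(_ a)]; last by rewrite ha.
apply/eqP; rewrite -subr_eq0; apply/eqP/inP_iota.
rewrite rmorphB.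
have -> : iota b - iota a = (f - iota a) + - (f - iota b).
  by rewrite opprB [RHS]addrC [RHS]addrA subrK.
exact: inP_add ha (inP_opp hb).
Qed.

Lemma resid_spec {f a} : inP v (f - iota a) -> inP v (f - iota (resid iota v f)).
Proof. by move=> h; rewrite (resid_uniq h). Qed.

Lemma resid_lin n (c : 'I_n -> K) (f : 'I_n -> F) :
  (forall i, inP v (f i - iota (resid iota v (f i)))) ->
  resid iota v (\sum_i iota (c i) * f i) = \sum_i c i * resid iota v (f i).
Proof.
move=> h; apply: resid_uniq.
rewrite rmorph_sum -sumrB.
apply: (big_ind (inP v)); first by rewrite /inP eqxx.
  by move=> x y hx hy; apply: inP_add hx hy.
move=> i _; rewrite rmorphM -mulrBr; exact: inP_mul (inO_iota _) (h i).
Qed.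

Lemma v1 : v 1 = 0.
Proof.
have := @v_mul 1 1 (oner_neq0 _) (oner_neq0 _); rewrite mulr1 => h.
by apply/(addrI (v 1)); rewrite addr0 -h.
Qed.

Lemma resid_ex {f} : place_deg iota v 1 -> inO v f -> exists a, inP v (f - iota a).
Proof.
move=> [b [hb0 _ hb]] hf.
have [c' hc'] : exists c' : 'I_1 -> K, inP v (1 - \sum_(i < 1) iota (c' i) * b i).
  by apply: hb; have := inO_iota 1; rewrite rmorph1.
have [c hc] := hb f hf.
rewrite big_ord1 in hc; rewrite big_ord1 in hc'.
have c'0 : c' ord0 != 0.
  apply/eqP => c0; move: hc'.
  by rewrite c0 rmorph0 mul0r subr0 /inP oner_eq0 v1 ltxx.
exists (c ord0 / c' ord0).
have -> : f - iota (c ord0 / c' ord0) =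
   (f - iota (c ord0) * b ord0) + iota (c ord0 / c' ord0) * - (1 - iota (c' ord0) * b ord0).
  rewrite opprB mulrBr mulrA -rmorphM mulfVK // mulr1 addrA subrK //.
apply: inP_add hc _; apply: inP_mul (inO_iota _) (inP_opp hc').
Qed.

Lemma resid_P f : place_deg iota v 1 -> inO v f ->
  inP v (f - iota (resid iota v f)).
Proof. by move=> hd hf; have [a ha] := resid_ex hd hf; exact: resid_spec ha. Qed.

End Val.

Lemma inL_lin (K : finFieldType) (F : fieldType) (iota : {rmorphism K -> F})
  G n (c : 'I_n -> K) (f : 'I_n -> F) :
  (forall i, inL iota G (f i)) -> inL iota G (\sum_i iota (c i) * f i).
Proof.
move=> hf; apply: (big_ind (inL iota G)); first by left.
  move=> x y [->|hx]; first by rewrite add0r.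
  move=> [->|hy]; first by rewrite addr0; right.
  have [->|s0] := eqVneq (x + y) 0; first by left.
  right => w hw.
  have [->|x0] := eqVneq x 0; first by rewrite add0r; apply: hy.
  have [->|y0] := eqVneq y 0; first by rewrite addr0; apply: hx.
  have hm := @v_min K F iota w hw x y x0 y0 s0.
  have h1 := hx w hw; have h2 := hy w hw.
  have h3 : 0 <= Num.min (w x) (w y) + G w.
    by rewrite addr_minl le_min h1 h2.
  by apply: (le_trans h3); rewrite lerD2r.
move=> i _; have [->|c0] := eqVneq (c i) 0; first by rewrite rmorph0 mul0r; left.
case: (hf i) => [->|h]; first by rewrite mulr0; left.
have [->|f0] := eqVneq (f i) 0; first by rewrite mulr0; left.
right => w hw; rewrite (@v_mul K F iota w hw) ?iota_neq0 // (@v_iota K F iota w hw) //.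
by rewrite add0r; apply: h.
Qed.

Lemma scale_ok (K : finFieldType) (F : fieldType) (iota : {rmorphism K -> F})
  D e (k : int) :
  is_divisor iota D -> div_deg iota D e ->
  is_divisor iota (scale_div k D) /\ div_deg iota (scale_div k D) (k * e).
Proof.
move=> [hD1 [n [ws hws]]] [n' [ws' [d [hinj hsup hpl he]]]]; split.
  split.
    move=> w; rewrite /scale_div mulf_eq0 negb_or => /andP [_]; exact: hD1.
  exists n, ws => w; rewrite /scale_div mulf_eq0 negb_or => /andP [_]; exact: hws.
exists n', ws', d; split => //.
  move=> w; rewrite /scale_div mulf_eq0 negb_or => /andP [_]; exact: hsup.
by rewrite he mulr_sumr; apply: eq_bigr => i _; rewrite /scale_div mulrA.
Qed.

Theorem lemma2p3
  (K : finFieldType) (F : fieldType) (iota : {rmorphism K -> F})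
  (g : int)
  (sigma : {rmorphism F -> F}) (sigma_inv : F -> F)
  (N m l : nat) (P : nat -> (F -> int)) (D : (F -> int) -> int) (e : int)
  (s : nat) (y : nat -> nat -> K) :
  is_function_field iota ->
  full_constant_field iota ->
  is_genus iota g ->
  cancel sigma sigma_inv -> cancel sigma_inv sigma ->
  (forall a : K, sigma (iota a) = iota a) ->
  (0 < N)%N -> (0 < m)%N -> (0 < l)%N ->
  (forall i j, (1 <= i <= N)%N -> (j < m)%N ->
     rational_place iota (place_iter sigma_inv j (P i))) ->
  (forall i j i' j', (1 <= i <= N)%N -> (j < m)%N ->
     (1 <= i' <= N)%N -> (j' < m)%N -> (i, j) <> (i', j') ->
     place_iter sigma_inv j (P i) <> place_iter sigma_inv j' (P i')) ->
  is_divisor iota D ->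
  div_deg iota D e ->
  0 < e ->
  (forall w, D (fun x => w (sigma x)) = D w) ->
  (forall i j, (1 <= i <= N)%N -> (j < m)%N -> D (place_iter sigma_inv j (P i)) = 0) ->
  (1 <= s <= m)%N ->
  let kappa := ceil_div
      ((N * (m - s + 1))%:Z - e * l%:Z + (s.+1)%:Z * (g - 1) + 1)
      (e * (s.+1)%:Z) in
  exists A : nat -> F,
    [/\ inL iota (scale_div (kappa + l%:Z) D) (A 0%N),
        (forall k, (1 <= k <= s)%N -> inL iota (scale_div kappa D) (A k)),
        (exists k, (k <= s)%N /\ A k != 0) &
        (forall i j, (1 <= i <= N)%N -> (j <= m - s)%N ->
           resid iota (place_iter sigma_inv j (P i)) (A 0%N)
           + \sum_(1 <= k < s.+1)
               resid iota (place_iter sigma_inv j (P i)) (A k) * y i (j + k)%N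
           = 0)].
Proof.
move=> _ _ [hgen _] _ _ _ hN hm hl hrat _ hdiv hdeg he _ hDP /andP [hs1 hsm] kappa.
have [hd0 hdd0] := @scale_ok _ _ iota D e (kappa + l%:Z) hdiv hdeg.
have [hd1 hdd1] := @scale_ok _ _ iota D e kappa hdiv hdeg.
have [n0 [f0 [hn0 [hf0L hf0I]]]] := hgen _ _ hd0 hdd0.
have [n1 [f1 [hn1 [hf1L hf1I]]]] := hgen _ _ hd1 hdd1.
pose pl (i j : nat) := place_iter sigma_inv j (P i).
pose M (t : ('I_n0 + 'I_s * 'I_n1)%type) (ij : ('I_N * 'I_(m - s).+1)%type) : K :=
  let w := pl (ij.1).+1 ij.2 in
  match t with
  | inl a => resid iota w (f0 a)
  | inr kb => resid iota w (f1 kb.2) * y (ij.1).+1 (ij.2 + (kb.1).+1)%N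
  end.
have hcard : (#|{: 'I_N * 'I_(m - s).+1}| < #|{: 'I_n0 + 'I_s * 'I_n1}|)%N.
  rewrite card_prod card_sum card_prod !card_ord.
  have hk : (N * (m - s + 1))%N%:Z - e * l%:Z + (s.+1)%:Z * (g - 1) + 1
            <= kappa * (e * (s.+1)%:Z).
    rewrite /kappa /ceil_div mulNr lerNr; apply: lez_floor.
    by rewrite mulf_eq0 negb_or gt_eqF.
  have hs1n : (s%:Z) * (kappa * e + 1 - g) <= s%:Z * n1%:Z.
    by apply: ler_wpM2l.
  rewrite -ltz_nat PoszD !PoszM; rewrite PoszM addn1 in hk.
  move: hk hs1n hn0; set X := (m - s).+1; rewrite -!/(Posz _).
  rewrite -[s.+1]addn1 PoszD.
  move: (kappa) (Posz (N * X)) => k NX; rewrite -/(Posz N * Posz X).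
  nia.
have [c [[t0 ht0] hc]] := @kernel_exists K _ _ M hcard.
pose cc (q : nat) (b : 'I_n1) := \sum_(q' : 'I_s | (q' : nat) == q) c (inr (q', b)).
pose A (k : nat) := if k is q.+1 then \sum_b iota (cc q b) * f1 b
                    else \sum_a iota (c (inl a)) * f0 a.
exists A; split.
- exact: inL_lin.
- by case=> [|k] // _; apply: inL_lin.
- case: t0 ht0 => [a|[q b]] ht0.
    exists 0%N; split => //; apply/negP => /eqP h0.
    by move: ht0; rewrite (hf0I (fun a => c (inl a)) h0 a) eqxx.
  exists q.+1; split; first exact: ltn_ord q.
  apply/negP => /eqP h0.
  move: ht0; have := hf1I (cc q) h0 b.
  rewrite /cc (big_pred1 q) => [-> //|q' /=]; last exact: val_eqE.
  by rewrite eqxx.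
- move=> [|i] // j /andP [_ hiN] hj.
  have hjm : (j < m)%N by lia.
  have [hpl hdg] := hrat i.+1 j hiN hjm.
  have hDw := hDP i.+1 j hiN hjm.
  set w := place_iter sigma_inv j (P i.+1) in hpl hdg hDw *.
  have hO G f : inL iota (scale_div G D) f -> inO w f.
    case => [->|h]; first by rewrite /inO eqxx.
    by have := h w hpl; rewrite /scale_div hDw mulr0 addr0 /inO => ->; rewrite orbT.
  have hR f : inO w f -> inP w (f - iota (resid iota w f)).
    move=> hf; exact: (@resid_P K F iota w hpl f hdg hf).
  have hE := hc (Ordinal hiN, Ordinal (hj : (j < (m - s).+1)%N)).
  rewrite big_sumType /= in hE; rewrite -[RHS]hE -/w.
  rewrite /pl -/w; congr (_ + _).
    by rewrite /A (@resid_lin K F iota w hpl) // => a; apply: hR (hO _ _ (hf0L a)).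
  rewrite big_add1 /= big_mkord.
  rewrite (eq_bigr (fun q : 'I_s => \sum_b c (inr (q, b)) *
     (resid iota w (f1 b) * y i.+1 (j + q.+1)%N))); last first.
    move=> q _; rewrite /A (@resid_lin K F iota w hpl); last first.
      by move=> b; apply: hR (hO _ _ (hf1L b)).
    rewrite mulr_suml; apply: eq_bigr => b _.
    rewrite /cc (big_pred1 q) => [|q' /=]; last exact: val_eqE.
    by rewrite mulrA.
  rewrite pair_big; apply: eq_bigr => -[q b] _ //.
Qed.
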